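(* Let $G=\mathbb R^2\times SL(2,\mathbb C)$ be the simply connected Lie group with Lie algebra $2\mathbb R\oplus\mathfrak{sl}(2,\mathbb C)$. Let $\Delta\subset SL(2,\mathbb C)$ be a cocompact discrete subgroup, and let $\Gamma=\mathbb Z\times\mathbb Z\times\Delta\subset G$. Then the compact manifold $G/\Gamma$ admits an invariant strong HPKT structure.
   Context: An almost hyper-paracomplex structure on a manifold is a triple $(J_1,J_2,J_3)$ of endomorphisms of the tangent bundle with $J_1^2=J_2^2=\mathrm{id}$, $J_3^2=-\mathrm{id}$ and $J_1J_2=-J_2J_1=J_3$. It is hyper-paracomplex if each $J_a$ has vanishing Nijenhuis tensor. A metric $g$ is hyperparahermitian if $g(J_1X,J_1Y)=g(J_2X,J_2Y)=-g(J_3X,J_3Y)=-g(X,Y)$. An HPKT structure is a hyper-paracomplex structure together with a hyperparahermitian metric admitting a linear connection $\nabla$ with $\nabla g=\nabla J_a=0$ ($a=1,2,3$) and totally skew-symmetric torsion, i.e. $T^\nabla(X,Y,Z):=g(T^\nabla(X,Y),Z)$ is a 3-form. It is strong if $dT^\nabla=0$. ''Invariant'' on $G/\Gamma$ means induced by left-invariant structures on $G$, where $\Gamma$ acts by left translations. *)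

(* Defs.v *)
From HB Require Import structures.
From mathcomp Require Import all_boot all_order all_algebra.
From mathcomp Require Import reals.
From mathcomp.real_closed Require Import complex.
Set Implicit Arguments. Unset Strict Implicit. Unset Printing Implicit Defensive.
Import Order.TTheory GRing.Theory Num.Theory.
Local Open Scope ring_scope.

Section LieAlg.
Variable R : realType.

(* The real Lie algebra  g = 2R (+) sl(2,C), realified, identified with 'rV[R]_8.
   Coordinates: x0, x1 : the abelian factor R^2;
   sl(2,C) element  [[h, e], [f, -h]]  with
   h = x2 + i x3,  e = x4 + i x5,  f = x6 + i x7. *)
Definition V := 'rV[R]_8.

Definition cc (x : V) (k : nat) : R[i] := Complex (x 0 (inord k)) (x 0 (inord k.+1)).

Definition slmat (x : V) : 'M[R[i]]_2 :=
  \matrix_(a < 2, b < 2)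
    (if (a == 0 :> nat) && (b == 0 :> nat) then cc x 2
     else if (a == 0 :> nat) then cc x 4
     else if (b == 0 :> nat) then cc x 6
     else - cc x 2).

(* coordinates of a (traceless) complex 2x2 matrix, back in V with zero R^2 part *)
Definition of_slmat (M : 'M[R[i]]_2) : V :=
  \row_(k < 8)
    (if (k == 2 :> nat) then complex.Re (M 0 0) else if (k == 3 :> nat) then complex.Im (M 0 0)
     else if (k == 4 :> nat) then complex.Re (M 0 1) else if (k == 5 :> nat) then complex.Im (M 0 1)
     else if (k == 6 :> nat) then complex.Re (M 1 0) else if (k == 7 :> nat) then complex.Im (M 1 0)
     else 0).

Definition lieb (x y : V) : V :=
  of_slmat (slmat x *m slmat y - slmat y *m slmat x).

(* left-invariant endomorphisms (acting on row vectors) *)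
Definition app (J : 'M[R]_8) (x : V) : V := x *m J.

Definition nijenhuis (J : 'M[R]_8) (x y : V) : V :=
  lieb (app J x) (app J y) - app J (lieb (app J x) y) - app J (lieb x (app J y))
  + app J (app J (lieb x y)).

Definition almost_hyper_paracomplex (J1 J2 J3 : 'M[R]_8) : Prop :=
  (forall x, app J1 (app J1 x) = x) /\ (forall x, app J2 (app J2 x) = x) /\
  (forall x, app J3 (app J3 x) = - x) /\
  (* J1 o J2 = J3 and J2 o J1 = - J3 as endomorphisms x |-> x *m J;
     since app (A *m B) x = app B (app A x), J1 o J2 is the matrix J2 *m J1 *)
  (forall x, app J1 (app J2 x) = app J3 x) /\
  (forall x, app J2 (app J1 x) = - app J3 x).

Definition hyper_paracomplex (J1 J2 J3 : 'M[R]_8) : Prop :=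
  almost_hyper_paracomplex J1 J2 J3 /\
  forall x y, nijenhuis J1 x y = 0 /\ nijenhuis J2 x y = 0 /\ nijenhuis J3 x y = 0.

Definition gf (g : 'M[R]_8) (x y : V) : R := (x *m g *m y^T) 0 0.

Definition is_metric (g : 'M[R]_8) : Prop := g^T = g /\ \det g != 0.

Definition hyperparahermitian (g J1 J2 J3 : 'M[R]_8) : Prop :=
  is_metric g /\ forall x y,
    gf g (app J1 x) (app J1 y) = - gf g x y /\
    gf g (app J2 x) (app J2 y) = - gf g x y /\
    - gf g (app J3 x) (app J3 y) = - gf g x y.

(* left-invariant linear connection: nabla_{e_k} is the endomorphism nab k *)
Definition nabla (nab : 'I_8 -> 'M[R]_8) (x y : V) : V :=
  \sum_(k < 8) x 0 k *: app (nab k) y.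

Definition torsion (nab : 'I_8 -> 'M[R]_8) (x y : V) : V :=
  nabla nab x y - nabla nab y x - lieb x y.

Definition torsion3 (g : 'M[R]_8) (nab : 'I_8 -> 'M[R]_8) (x y z : V) : R :=
  gf g (torsion nab x y) z.

(* exterior derivative of a left-invariant 3-form (Chevalley-Eilenberg) *)
Definition d3 (T : V -> V -> V -> R) (x0 x1 x2 x3 : V) : R :=
    - T (lieb x0 x1) x2 x3 + T (lieb x0 x2) x1 x3 - T (lieb x0 x3) x1 x2
    - T (lieb x1 x2) x0 x3 + T (lieb x1 x3) x0 x2 - T (lieb x2 x3) x0 x1.

Definition HPKT_connection (g J1 J2 J3 : 'M[R]_8) (nab : 'I_8 -> 'M[R]_8) : Prop :=
  (forall x y z, gf g (nabla nab x y) z + gf g y (nabla nab x z) = 0) /\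
  (forall x y, nabla nab x (app J1 y) = app J1 (nabla nab x y) /\
               nabla nab x (app J2 y) = app J2 (nabla nab x y) /\
               nabla nab x (app J3 y) = app J3 (nabla nab x y)) /\
  (forall x y z, torsion3 g nab x y z = - torsion3 g nab y x z /\
                 torsion3 g nab x y z = - torsion3 g nab x z y).

Definition invariant_strong_HPKT (g J1 J2 J3 : 'M[R]_8) : Prop :=
  hyper_paracomplex J1 J2 J3 /\ hyperparahermitian g J1 J2 J3 /\
  exists nab, HPKT_connection g J1 J2 J3 nab /\
    forall x0 x1 x2 x3, d3 (torsion3 g nab) x0 x1 x2 x3 = 0.

End LieAlg.

(* Main.v *)
Require Import Defs.
From HB Require Import structures.
From mathcomp Require Import all_boot all_order all_algebra.
From mathcomp Require Import reals ring.
From mathcomp.real_closed Require Import complex.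
Set Implicit Arguments. Unset Strict Implicit. Unset Printing Implicit Defensive.
Import Order.TTheory GRing.Theory Num.Theory.
Local Open Scope ring_scope.

Section S.
Variable R : realType.

Definition vec8 (a0 a1 a2 a3 a4 a5 a6 a7 : R) : V R :=
  \row_(k < 8) nth 0 [:: a0; a1; a2; a3; a4; a5; a6; a7] k.

Lemma V_eta (x : V R) : x = vec8 (x 0 (inord 0)) (x 0 (inord 1)) (x 0 (inord 2))
  (x 0 (inord 3)) (x 0 (inord 4)) (x 0 (inord 5)) (x 0 (inord 6)) (x 0 (inord 7)).
Proof.
apply/rowP => k; rewrite mxE.
have -> : (0 : 'I_1) = ord0 by apply/val_inj.
case: k => [[|[|[|[|[|[|[|[|k]]]]]]]] Hk] //=;
  by congr (x _ _); apply/val_inj; rewrite /= inordK.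
Qed.

Lemma caddE (a b c d : R) : (Complex a b) + (Complex c d) = Complex (a + c) (b + d).
Proof. by []. Qed.
Lemma coppE (a b : R) : - (Complex a b) = Complex (- a) (- b).
Proof. by []. Qed.
Lemma cmulE (a b c d : R) : (Complex a b) * (Complex c d) = Complex (a * c - b * d) (a * d + b * c).
Proof. by []. Qed.

Lemma lieb_vec8 a0 a1 a2 a3 a4 a5 a6 a7 b0 b1 b2 b3 b4 b5 b6 b7 :
  lieb (vec8 a0 a1 a2 a3 a4 a5 a6 a7) (vec8 b0 b1 b2 b3 b4 b5 b6 b7) =
  vec8 0 0 ((a4*b6 - a5*b7) - (a6*b4 - a7*b5)) ((a4*b7 + a5*b6) - (a6*b5 + a7*b4))
   (2*((a2*b4 - a3*b5) - (a4*b2 - a5*b3))) (2*((a2*b5 + a3*b4) - (a4*b3 + a5*b2)))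
   (2*((a6*b2 - a7*b3) - (a2*b6 - a3*b7))) (2*((a6*b3 + a7*b2) - (a2*b7 + a3*b6))).
Proof.
apply/rowP => k; rewrite /lieb /of_slmat /slmat /cc !mxE.
case: k => [[|[|[|[|[|[|[|[|k]]]]]]]] Hk] //=;
rewrite ?mxE !big_ord_recr !big_ord0 /= !mxE /= !inordK //=;
rewrite ?add0r; repeat rewrite ?coppE ?cmulE ?caddE; rewrite /=; ring.
Qed.

Definition mk8 (rows : seq (seq R)) : 'M[R]_8 :=
  \matrix_(i < 8, j < 8) nth 0 (nth [::] rows i) j.

Definition hf : R := 2^-1.

Definition J1m := mk8
 [:: [:: 0;0;1;0;0;0;0;0]; [:: 0;0;0;1;0;0;0;0]; [:: 1;0;0;0;0;0;0;0]; [:: 0;1;0;0;0;0;0;0];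
     [:: 0;0;0;0;-1;0;0;0]; [:: 0;0;0;0;0;-1;0;0]; [:: 0;0;0;0;0;0;1;0]; [:: 0;0;0;0;0;0;0;1]].
Definition J2m := mk8
 [:: [:: 0;0;0;0;1;0;1;0]; [:: 0;0;0;0;0;1;0;1]; [:: 0;0;0;0;1;0;-1;0]; [:: 0;0;0;0;0;1;0;-1];
     [:: hf;0;hf;0;0;0;0;0]; [:: 0;hf;0;hf;0;0;0;0]; [:: hf;0;-hf;0;0;0;0;0]; [:: 0;hf;0;-hf;0;0;0;0]].
Definition J3m := mk8
 [:: [:: 0;0;0;0;-1;0;1;0]; [:: 0;0;0;0;0;-1;0;1]; [:: 0;0;0;0;-1;0;-1;0]; [:: 0;0;0;0;0;-1;0;-1];
     [:: hf;0;hf;0;0;0;0;0]; [:: 0;hf;0;hf;0;0;0;0]; [:: -hf;0;hf;0;0;0;0;0]; [:: 0;-hf;0;hf;0;0;0;0]].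
Definition gm := mk8
 [:: [:: 2;0;0;0;0;0;0;0]; [:: 0;-2;0;0;0;0;0;0]; [:: 0;0;-2;0;0;0;0;0]; [:: 0;0;0;2;0;0;0;0];
     [:: 0;0;0;0;0;0;-1;0]; [:: 0;0;0;0;0;0;0;1]; [:: 0;0;0;0;-1;0;0;0]; [:: 0;0;0;0;0;1;0;0]].
Definition gi := mk8
 [:: [:: hf;0;0;0;0;0;0;0]; [:: 0;-hf;0;0;0;0;0;0]; [:: 0;0;-hf;0;0;0;0;0]; [:: 0;0;0;hf;0;0;0;0];
     [:: 0;0;0;0;0;0;-1;0]; [:: 0;0;0;0;0;0;0;1]; [:: 0;0;0;0;-1;0;0;0]; [:: 0;0;0;0;0;1;0;0]].

Ltac appt := apply/rowP; case=> [[|[|[|[|[|[|[|[|?]]]]]]]] ?] //=; rewrite /app !mxE /=;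
  rewrite !big_ord_recr big_ord0 /= !mxE /=; ring.

Lemma J1E a0 a1 a2 a3 a4 a5 a6 a7 : app J1m (vec8 a0 a1 a2 a3 a4 a5 a6 a7) =
  vec8 a2 a3 a0 a1 (-a4) (-a5) a6 a7.
Proof. appt. Qed.
Lemma J2E a0 a1 a2 a3 a4 a5 a6 a7 : app J2m (vec8 a0 a1 a2 a3 a4 a5 a6 a7) =
  vec8 ((a4+a6)*hf) ((a5+a7)*hf) ((a4-a6)*hf) ((a5-a7)*hf) (a0+a2) (a1+a3) (a0-a2) (a1-a3).
Proof. appt. Qed.
Lemma J3E a0 a1 a2 a3 a4 a5 a6 a7 : app J3m (vec8 a0 a1 a2 a3 a4 a5 a6 a7) =
  vec8 ((a4-a6)*hf) ((a5-a7)*hf) ((a4+a6)*hf) ((a5+a7)*hf) (-(a0+a2)) (-(a1+a3)) (a0-a2) (a1-a3).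
Proof. appt. Qed.

Lemma gfE a0 a1 a2 a3 a4 a5 a6 a7 b0 b1 b2 b3 b4 b5 b6 b7 :
  gf gm (vec8 a0 a1 a2 a3 a4 a5 a6 a7) (vec8 b0 b1 b2 b3 b4 b5 b6 b7) =
  2*(a0*b0 - a1*b1) - 2*(a2*b2 - a3*b3) - (a4*b6 - a5*b7) - (a6*b4 - a7*b5).
Proof.
rewrite /gf !mxE !big_ord_recr big_ord0 /= !mxE /=.
rewrite !big_ord_recr !big_ord0 /= !mxE /=; ring.
Qed.

Lemma vaddE a0 a1 a2 a3 a4 a5 a6 a7 b0 b1 b2 b3 b4 b5 b6 b7 :
  vec8 a0 a1 a2 a3 a4 a5 a6 a7 + vec8 b0 b1 b2 b3 b4 b5 b6 b7 =
  vec8 (a0+b0) (a1+b1) (a2+b2) (a3+b3) (a4+b4) (a5+b5) (a6+b6) (a7+b7).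
Proof.
apply/rowP => k; rewrite !mxE.
by case: k => [[|[|[|[|[|[|[|[|k]]]]]]]] Hk] //=; rewrite addr0.
Qed.
Lemma voppE a0 a1 a2 a3 a4 a5 a6 a7 :
  - vec8 a0 a1 a2 a3 a4 a5 a6 a7 = vec8 (-a0) (-a1) (-a2) (-a3) (-a4) (-a5) (-a6) (-a7).
Proof.
apply/rowP => k; rewrite !mxE.
by case: k => [[|[|[|[|[|[|[|[|k]]]]]]]] Hk] //=; rewrite oppr0.
Qed.
Lemma vec8_0 a0 a1 a2 a3 a4 a5 a6 a7 :
  a0 = 0 -> a1 = 0 -> a2 = 0 -> a3 = 0 -> a4 = 0 -> a5 = 0 -> a6 = 0 -> a7 = 0 ->
  vec8 a0 a1 a2 a3 a4 a5 a6 a7 = 0.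
Proof.
move=> -> -> -> -> -> -> -> ->; apply/rowP => k; rewrite !mxE.
by case: k => [[|[|[|[|[|[|[|[|k]]]]]]]] Hk] //=.
Qed.
Lemma vec8_eq a0 a1 a2 a3 a4 a5 a6 a7 b0 b1 b2 b3 b4 b5 b6 b7 :
  a0 = b0 -> a1 = b1 -> a2 = b2 -> a3 = b3 -> a4 = b4 -> a5 = b5 -> a6 = b6 -> a7 = b7 ->
  vec8 a0 a1 a2 a3 a4 a5 a6 a7 = vec8 b0 b1 b2 b3 b4 b5 b6 b7.
Proof. by move=> -> -> -> -> -> -> -> ->. Qed.

Lemma hfE : 2 * hf = 1.
Proof. by rewrite /hf mulfV // pnatr_eq0. Qed.

End S.

Section S2.
Variable R : realType.


Lemma nabla0 (x y : V R) : nabla (fun _ => 0) x y = 0.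
Proof. by rewrite /nabla big1 // => k _; rewrite /app mulmx0 scaler0. Qed.

Lemma torsion0 (x y : V R) : torsion (fun _ => 0) x y = - lieb x y.
Proof. by rewrite /torsion !nabla0 subrr sub0r. Qed.

Lemma torsion3_0 g (x y z : V R) : torsion3 g (fun _ => 0) x y z = gf g (- lieb x y) z.
Proof. by rewrite /torsion3 torsion0. Qed.

Lemma gfNE a0 a1 a2 a3 a4 a5 a6 a7 b0 b1 b2 b3 b4 b5 b6 b7 :
  gf (gm R) (- vec8 a0 a1 a2 a3 a4 a5 a6 a7) (vec8 b0 b1 b2 b3 b4 b5 b6 b7) =
  - (2*(a0*b0 - a1*b1) - 2*(a2*b2 - a3*b3) - (a4*b6 - a5*b7) - (a6*b4 - a7*b5)).
Proof. rewrite voppE gfE; ring. Qed.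

Lemma V_ind (P : V R -> Prop) :
  (forall a0 a1 a2 a3 a4 a5 a6 a7, P (vec8 a0 a1 a2 a3 a4 a5 a6 a7)) -> forall x, P x.
Proof. by move=> H x; rewrite (V_eta x); apply: H. Qed.


Lemma d3_ext (T T' : V R -> V R -> V R -> R) : (forall a b c, T a b c = T' a b c) ->
  forall x0 x1 x2 x3, d3 T x0 x1 x2 x3 = d3 T' x0 x1 x2 x3.
Proof. move=> H x0 x1 x2 x3; unfold d3; repeat (rewrite -> H); reflexivity. Qed.

Lemma d3_expand (x0 x1 x2 x3 : V R) :
  d3 (fun a b c => gf (gm R) (- lieb a b) c) x0 x1 x2 x3 =
    - gf (gm R) (- lieb (lieb x0 x1) x2) x3 + gf (gm R) (- lieb (lieb x0 x2) x1) x3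
    - gf (gm R) (- lieb (lieb x0 x3) x1) x2
    - gf (gm R) (- lieb (lieb x1 x2) x0) x3 + gf (gm R) (- lieb (lieb x1 x3) x0) x2
    - gf (gm R) (- lieb (lieb x2 x3) x0) x1.
Proof. reflexivity. Qed.

Lemma hf2 : (2:R) != 0. Proof. by rewrite pnatr_eq0. Qed.

Ltac fld := rewrite /hf; field; done.

Lemma ahp : almost_hyper_paracomplex (J1m R) (J2m R) (J3m R).
Proof.
split; [|split;[|split;[|split]]] => x; rewrite (V_eta x);
repeat rewrite ?J1E ?J2E ?J3E ?voppE; apply: vec8_eq; fld.
Qed.

Lemma nij1 (x y : V R) : nijenhuis (J1m R) x y = 0.
Proof.
rewrite /nijenhuis (V_eta x) (V_eta y);
repeat rewrite ?J1E ?lieb_vec8 ?vaddE ?voppE; apply: vec8_0; fld.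
Qed.

Lemma nij2 (x y : V R) : nijenhuis (J2m R) x y = 0.
Proof.
rewrite /nijenhuis (V_eta x) (V_eta y);
repeat rewrite ?J2E ?lieb_vec8 ?vaddE ?voppE; apply: vec8_0; fld.
Qed.
Lemma nij3 (x y : V R) : nijenhuis (J3m R) x y = 0.
Proof.
rewrite /nijenhuis (V_eta x) (V_eta y);
repeat rewrite ?J3E ?lieb_vec8 ?vaddE ?voppE; apply: vec8_0; fld.
Qed.

Lemma gsym : (gm R)^T = gm R.
Proof.
apply/matrixP => i j; rewrite !mxE.
by case: i => [[|[|[|[|[|[|[|[|?]]]]]]]] ?] //=; case: j => [[|[|[|[|[|[|[|[|?]]]]]]]] ?].
Qed.

Lemma ginv : gm R *m gi R = 1%:M.
Proof.
apply/matrixP => i j; rewrite !mxE.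
case: i => [[|[|[|[|[|[|[|[|?]]]]]]]] ?] //=; case: j => [[|[|[|[|[|[|[|[|?]]]]]]]] ?] //=;
rewrite !big_ord_recr big_ord0 /= !mxE /=; fld.
Qed.

Lemma gdet : \det (gm R) != 0.
Proof. by rewrite -unitfE -unitmxE; case: (mulmx1_unit ginv). Qed.

Lemma hph : hyperparahermitian (gm R) (J1m R) (J2m R) (J3m R).
Proof.
split; first by split; [exact: gsym | exact: gdet].
move=> x y; rewrite (V_eta x) (V_eta y) !J1E !J2E !J3E !gfE.
split; [|split]; fld.
Qed.

Lemma conn : HPKT_connection (gm R) (J1m R) (J2m R) (J3m R) (fun _ => 0).
Proof.
split; [|split].
- by move=> x y z; rewrite !nabla0 /gf trmx0 !mul0mx !mulmx0 mxE addr0.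
- by move=> x y; rewrite !nabla0 /app !mul0mx.
- move=> x y z; rewrite /torsion3 !torsion0 (V_eta x) (V_eta y) (V_eta z).
  rewrite !lieb_vec8 !voppE !gfE; split; ring.
Qed.

Lemma closed3 (x0 x1 x2 x3 : V R) : d3 (torsion3 (gm R) (fun _ => 0)) x0 x1 x2 x3 = 0.
Proof.
rewrite (d3_ext (torsion3_0 (gm R))) d3_expand.
(elim/V_ind: x0 => a0 a1 a2 a3 a4 a5 a6 a7; elim/V_ind: x1 => b0 b1 b2 b3 b4 b5 b6 b7;
  elim/V_ind: x2 => c0 c1 c2 c3 c4 c5 c6 c7; elim/V_ind: x3 => d0 d1 d2 d3 d4 d5 d6 d7).
repeat (rewrite -> lieb_vec8). repeat (rewrite -> gfNE). ring.
Qed.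
End S2.

Theorem mainTheorem4 (R : realType) :
  exists g J1 J2 J3 : 'M[R]_8, invariant_strong_HPKT g J1 J2 J3.
Proof.
exists (gm R), (J1m R), (J2m R), (J3m R).
split; first by split; [exact: ahp | move=> x y; rewrite nij1 nij2 nij3].
split; first exact: hph.
exists (fun _ => 0); split; [exact: conn | exact: closed3].
Qed.
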